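(* Let $q$ be a power of an odd prime $p$, $G=\mathrm{SU}_3(q)$, and let $\mathcal{C}=C_2^{(0)}$. Then $K_{\mathcal{C}}$ is irreducible.
   Context: $\mathrm{SU}_3(q)$ is the group of determinant-one matrices $M\in\mathrm{GL}_3(q^2)$ with $M^*JM=J$, where $J$ has ones on the anti-diagonal and zeros elsewhere and $M^*$ is the transpose of $M$ with every entry raised to the $q$-th power. $C_2^{(0)}$ is the $\mathrm{SU}_3(q)$-conjugacy class containing the matrices $\begin{pmatrix}1&0&a\\0&1&0\\0&0&1\end{pmatrix}$ with $a\in\mathbb{F}_{q^2}^\times$, $a+a^q=0$. For a finite group $G$ and a subset $\mathcal{C}\subseteq G\setminus\{1\}$ closed under conjugation, the Killing form is $K_{\mathcal{C}}(a,b)=|C_G(ab)\cap\mathcal{C}|$ on the basis $\mathcal{C}$; it is irreducible if the graph with vertex set $\mathcal{C}$, in which distinct $a,b$ are adjacent iff $C_G(ab)\cap\mathcal{C}\neq\emptyset$, is connected. *)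

(* Defs.v *)
From HB Require Import structures.
From mathcomp Require Import all_boot all_order all_algebra all_fingroup all_field.
Set Implicit Arguments. Unset Strict Implicit. Unset Printing Implicit Defensive.
Import GRing.Theory.
Local Open Scope ring_scope.
Local Open Scope group_scope.

(* Killing form K_C(a,b) = |C_G(ab) ∩ C| on a finite group, and its
   irreducibility: the graph on C (distinct a,b adjacent iff C_G(ab) ∩ C
   is nonempty) is connected. *)
Definition killing_form (gT : finGroupType) (G C : {set gT}) (a b : gT) : nat :=
  #|'C_G[a * b] :&: C|.

Definition killing_adj (gT : finGroupType) (G C : {set gT}) : rel gT :=
  [rel a b | [&& a \in C, b \in C, a != b & (0 < killing_form G C a b)%N]].

Definition killing_irreducible (gT : finGroupType) (G C : {set gT}) : Prop :=
  forall a b, a \in C -> b \in C -> connect (killing_adj G C) a b.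

Definition Jmx (F : fieldType) : 'M[F]_3 :=
  \matrix_(i < 3, j < 3) (if (i + j == 2)%N then 1%R else 0%R).

Definition qstar (F : fieldType) (q : nat) (M : 'M[F]_3) : 'M[F]_3 :=
  (map_mx (fun x : F => (x ^+ q)%R) M)^T.

(* SU_3(q) inside GL_3(F), where F is a field with q^2 elements *)
Definition SU3 (F : finFieldType) (q : nat) : {set {'GL_3[F]}} :=
  [set g : {'GL_3[F]} | (\det (GLval g) == 1%R)
      && (qstar q (GLval g) *m Jmx F *m GLval g == Jmx F)].

Definition transv (F : fieldType) (a : F) : 'M[F]_3 :=
  (1%:M + a *: delta_mx 0 2)%R.

Definition C20 (F : finFieldType) (q : nat) (a : F) : {set {'GL_3[F]}} :=
  [set g : {'GL_3[F]} | [exists h in SU3 F q,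
      GLval g == invmx (GLval h) *m transv a *m GLval h]].

(* Main.v *)
Require Import Defs.
From HB Require Import structures.
From mathcomp Require Import all_boot all_order all_algebra all_fingroup all_field.
From mathcomp Require Import ring.
Set Implicit Arguments. Unset Strict Implicit. Unset Printing Implicit Defensive.
Import GRing.Theory.
Local Open Scope ring_scope.

Section S.
Variable F : finFieldType.
Definition i0 : 'I_3 := @Ordinal 3 0 isT.
Definition i1 : 'I_3 := @Ordinal 3 1 isT.
Definition i2 : 'I_3 := @Ordinal 3 2 isT.
Definition M3 (a00 a01 a02 a10 a11 a12 a20 a21 a22 : F) : 'M[F]_3 :=
  \matrix_(i < 3, j < 3) nth 0 (nth [::] [:: [:: a00; a01; a02]; [:: a10; a11; a12]; [:: a20; a21; a22]] i) j.
Lemma M3E (A : 'M[F]_3) : A = M3 (A i0 i0) (A i0 i1) (A i0 i2) (A i1 i0) (A i1 i1) (A i1 i2) (A i2 i0) (A i2 i1) (A i2 i2).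
Proof.
apply/matrixP => i j; rewrite mxE.
case: i => [[|[|[|//]]] Hi]; case: j => [[|[|[|//]]] Hj] /=; congr (A _ _); exact: val_inj.
Qed.
Lemma M3_mul a00 a01 a02 a10 a11 a12 a20 a21 a22 b00 b01 b02 b10 b11 b12 b20 b21 b22 :
  M3 a00 a01 a02 a10 a11 a12 a20 a21 a22 *m M3 b00 b01 b02 b10 b11 b12 b20 b21 b22 =
  M3 (a00*b00+a01*b10+a02*b20) (a00*b01+a01*b11+a02*b21) (a00*b02+a01*b12+a02*b22)
     (a10*b00+a11*b10+a12*b20) (a10*b01+a11*b11+a12*b21) (a10*b02+a11*b12+a12*b22)
     (a20*b00+a21*b10+a22*b20) (a20*b01+a21*b11+a22*b21) (a20*b02+a21*b12+a22*b22).
Proof.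
apply/matrixP => i j; rewrite !mxE !big_ord_recr big_ord0 /= !mxE add0r.
by case: i => [[|[|[|//]]] Hi]; case: j => [[|[|[|//]]] Hj].
Qed.
Lemma M3_det a00 a01 a02 a10 a11 a12 a20 a21 a22 :
  \det (M3 a00 a01 a02 a10 a11 a12 a20 a21 a22) =
  a00 * (a11 * a22 - a12 * a21) - a01 * (a10 * a22 - a12 * a20) + a02 * (a10 * a21 - a11 * a20).
Proof.
rewrite (expand_det_row _ i0) !big_ord_recr big_ord0 /= add0r.
rewrite /cofactor.
rewrite !(expand_det_row _ ord0) !big_ord_recr big_ord0 /= !add0r /cofactor !det_mx11 !mxE /=.
rewrite !expr0 !expr1 !expr2 /=.
rewrite !big_ord0 /=; ring.
Qed.

Lemma M3_eq a00 a01 a02 a10 a11 a12 a20 a21 a22 b00 b01 b02 b10 b11 b12 b20 b21 b22 :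
  a00 = b00 -> a01 = b01 -> a02 = b02 -> a10 = b10 -> a11 = b11 -> a12 = b12 ->
  a20 = b20 -> a21 = b21 -> a22 = b22 ->
  M3 a00 a01 a02 a10 a11 a12 a20 a21 a22 = M3 b00 b01 b02 b10 b11 b12 b20 b21 b22.
Proof. by move=> -> -> -> -> -> -> -> -> ->. Qed.

Definition V3 (x0 x1 x2 : F) : 'cV[F]_3 :=
  \matrix_(i < 3, j < 1) nth 0 [:: x0; x1; x2] i.
Lemma V3E (v : 'cV[F]_3) : v = V3 (v i0 0) (v i1 0) (v i2 0).
Proof.
apply/matrixP => i j; rewrite mxE; rewrite [j]ord1.
case: i => [[|[|[|//]]] Hi] /=; congr (v _ _); exact: val_inj.
Qed.
Lemma M3_mulV a00 a01 a02 a10 a11 a12 a20 a21 a22 x0 x1 x2 :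
  M3 a00 a01 a02 a10 a11 a12 a20 a21 a22 *m V3 x0 x1 x2 =
  V3 (a00*x0+a01*x1+a02*x2) (a10*x0+a11*x1+a12*x2) (a20*x0+a21*x1+a22*x2).
Proof.
apply/matrixP => i j; rewrite !mxE !big_ord_recr big_ord0 /= !mxE add0r.
by case: i => [[|[|[|//]]] Hi].
Qed.
Lemma V3_eq x0 x1 x2 y0 y1 y2 : x0 = y0 -> x1 = y1 -> x2 = y2 -> V3 x0 x1 x2 = V3 y0 y1 y2.
Proof. by move=> -> -> ->. Qed.
Lemma V3_scale c x0 x1 x2 : c *: V3 x0 x1 x2 = V3 (c * x0) (c * x1) (c * x2).
Proof. by apply/matrixP => i j; rewrite !mxE; case: i => [[|[|[|//]]] Hi]. Qed.
Lemma V3_add x0 x1 x2 y0 y1 y2 : V3 x0 x1 x2 + V3 y0 y1 y2 = V3 (x0+y0) (x1+y1) (x2+y2).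
Proof. by apply/matrixP => i j; rewrite !mxE; case: i => [[|[|[|//]]] Hi]. Qed.
Lemma V3_opp x0 x1 x2 : - V3 x0 x1 x2 = V3 (-x0) (-x1) (-x2).
Proof. by apply/matrixP => i j; rewrite !mxE; case: i => [[|[|[|//]]] Hi]. Qed.
Lemma V3_inj x0 x1 x2 y0 y1 y2 : V3 x0 x1 x2 = V3 y0 y1 y2 -> [/\ x0 = y0, x1 = y1 & x2 = y2].
Proof.
move=> /matrixP H; split; [move: (H i0 0)|move: (H i1 0)|move: (H i2 0)]; by rewrite !mxE.
Qed.
Lemma M3_1 : (1%:M : 'M[F]_3) = M3 1 0 0 0 1 0 0 0 1.
Proof. by apply/matrixP => i j; rewrite !mxE; case: i => [[|[|[|//]]] Hi]; case: j => [[|[|[|//]]] Hj]; rewrite /= ?mulr0 ?mulr1. Qed.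
Lemma M3_J : Jmx F = M3 0 0 1 0 1 0 1 0 0.
Proof. by apply/matrixP => i j; rewrite !mxE; case: i => [[|[|[|//]]] Hi]; case: j => [[|[|[|//]]] Hj]; rewrite /= ?mulr0 ?mulr1. Qed.
Lemma M3_add a00 a01 a02 a10 a11 a12 a20 a21 a22 b00 b01 b02 b10 b11 b12 b20 b21 b22 :
  M3 a00 a01 a02 a10 a11 a12 a20 a21 a22 + M3 b00 b01 b02 b10 b11 b12 b20 b21 b22 =
  M3 (a00+b00) (a01+b01) (a02+b02) (a10+b10) (a11+b11) (a12+b12) (a20+b20) (a21+b21) (a22+b22).
Proof. by apply/matrixP => i j; rewrite !mxE; case: i => [[|[|[|//]]] Hi]; case: j => [[|[|[|//]]] Hj]; rewrite /= ?mulr0 ?mulr1. Qed.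
Lemma M3_scale c a00 a01 a02 a10 a11 a12 a20 a21 a22 :
  c *: M3 a00 a01 a02 a10 a11 a12 a20 a21 a22 =
  M3 (c*a00) (c*a01) (c*a02) (c*a10) (c*a11) (c*a12) (c*a20) (c*a21) (c*a22).
Proof. by apply/matrixP => i j; rewrite !mxE; case: i => [[|[|[|//]]] Hi]; case: j => [[|[|[|//]]] Hj]; rewrite /= ?mulr0 ?mulr1. Qed.
Lemma M3_transv (b : F) : transv b = M3 1 0 b 0 1 0 0 0 1.
Proof. apply/matrixP => i j; rewrite !mxE; case: i => [[|[|[|//]]] Hi]; case: j => [[|[|[|//]]] Hj]; rewrite /=; ring. Qed.
Lemma M3_map (f : F -> F) a00 a01 a02 a10 a11 a12 a20 a21 a22 :
  (map_mx f (M3 a00 a01 a02 a10 a11 a12 a20 a21 a22))^T =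
  M3 (f a00) (f a10) (f a20) (f a01) (f a11) (f a21) (f a02) (f a12) (f a22).
Proof. by apply/matrixP => i j; rewrite !mxE; case: i => [[|[|[|//]]] Hi]; case: j => [[|[|[|//]]] Hj]; rewrite /= ?mulr0 ?mulr1. Qed.
End S.

Section Main.
Variables (F : finFieldType) (p k : nat) (a : F).
Hypotheses (pp : prime p) (op : odd p) (kp : (0 < k)%N)
  (cardF : #|F| = ((p ^ k) ^ 2)%N) (a0 : a != 0) (aq : a + a ^+ (p ^ k) = 0).

Lemma charF : p \in [pchar F].
Proof. apply: (card_finPcharP (n := (k * 2)%N)) => //; by rewrite expnM. Qed.

Definition fr (x : F) := x ^+ (p ^ k).

Lemma frD x y : fr (x + y) = fr x + fr y.
Proof.
rewrite /fr; elim: k => [|n IH]; first by rewrite !expn0 !expr1.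
rewrite expnSr !exprM IH.
have := pFrobenius_autD_comm charF (mulrC (x ^+ (p ^ n)) (y ^+ (p ^ n))).
by rewrite !pFrobenius_autE.
Qed.
Lemma frM x y : fr (x * y) = fr x * fr y. Proof. exact: exprMn. Qed.
Lemma fr0 : fr 0 = 0. Proof. by rewrite /fr expr0n eqn0Ngt expn_gt0 prime_gt0. Qed.
Lemma fr1 : fr 1 = 1. Proof. exact: expr1n. Qed.
Lemma frN x : fr (- x) = - fr x.
Proof. by apply/eqP; rewrite -subr_eq0 opprK -frD addNr fr0. Qed.
Lemma frB x y : fr (x - y) = fr x - fr y. Proof. by rewrite frD frN. Qed.
Lemma frV x : fr (x^-1) = (fr x)^-1. Proof. exact: exprVn. Qed.
Lemma frK x : fr (fr x) = x.
Proof. by rewrite /fr -exprM mulnn -cardF expf_card. Qed.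
Lemma frn n : fr n%:R = n%:R.
Proof. elim: n => [|n IH]; first by rewrite fr0. by rewrite -addn1 natrD frD IH fr1. Qed.
Lemma fra : fr a = - a. Proof. by apply/eqP; rewrite -addr_eq0 addrC; apply/eqP. Qed.
Lemma fr_eq0 x : (fr x == 0) = (x == 0).
Proof. by rewrite /fr expf_eq0 expn_gt0 prime_gt0. Qed.
Lemma fr_sum (I : finType) (f : I -> F) : fr (\sum_i f i) = \sum_i fr (f i).
Proof. exact: (big_morph fr frD fr0). Qed.

Definition cst m n (A : 'M[F]_(m, n)) : 'M[F]_(n, m) := (map_mx fr A)^T.

Lemma cstM m n r (A : 'M[F]_(m, n)) (B : 'M[F]_(n, r)) : cst (A *m B) = cst B *m cst A.
Proof.
rewrite /cst -trmx_mul; congr (_^T); apply/matrixP => i j; rewrite !mxE fr_sum.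
by apply: eq_bigr => l _; rewrite frM !mxE.
Qed.
Lemma cstD m n (A B : 'M[F]_(m, n)) : cst (A + B) = cst A + cst B.
Proof. by apply/matrixP => i j; rewrite !mxE frD. Qed.
Lemma cstZ m n c (A : 'M[F]_(m, n)) : cst (c *: A) = fr c *: cst A.
Proof. by apply/matrixP => i j; rewrite !mxE frM. Qed.
Lemma cstN m n (A : 'M[F]_(m, n)) : cst (- A) = - cst A.
Proof. by apply/matrixP => i j; rewrite !mxE frN. Qed.
Lemma cstK m n (A : 'M[F]_(m, n)) : cst (cst A) = A.
Proof. by apply/matrixP => i j; rewrite !mxE frK. Qed.
Lemma cst1 n : cst (1%:M : 'M[F]_n) = 1%:M.
Proof. by apply/matrixP => i j; rewrite !mxE frn eq_sym. Qed.
Lemma cstJ : cst (Jmx F) = Jmx F.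
Proof. by rewrite /cst M3_J M3_map fr0 fr1 -M3_J. Qed.
Lemma cstV3 x0 x1 x2 (i : 'I_3) : (cst (V3 x0 x1 x2)) 0 i = fr (V3 x0 x1 x2 i 0).
Proof. by rewrite !mxE. Qed.

Definition J := Jmx F.
Definition unitary (h : 'M[F]_3) := cst h *m J *m h = J.
Definition form (u w : 'cV[F]_3) : F := (cst u *m J *m w) 0 0.

Lemma form_V3 x0 x1 x2 y0 y1 y2 :
  form (V3 x0 x1 x2) (V3 y0 y1 y2) = fr x0 * y2 + fr x1 * y1 + fr x2 * y0.
Proof.
rewrite /form /J M3_J -mulmxA M3_mulV !mxE !big_ord_recr big_ord0 /= !mxE /=.
ring.
Qed.

Lemma form_sym u w : form w u = fr (form u w).
Proof. by rewrite (V3E u) (V3E w) !form_V3 !frD !frM !frK; ring. Qed.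
Lemma form_addr u x y : form u (x + y) = form u x + form u y.
Proof. by rewrite (V3E u) (V3E x) (V3E y) V3_add !form_V3; ring. Qed.
Lemma form_scaler u c x : form u (c *: x) = c * form u x.
Proof. by rewrite (V3E u) (V3E x) V3_scale !form_V3; ring. Qed.
Lemma form_scalel u c x : form (c *: u) x = fr c * form u x.
Proof. by rewrite (V3E u) (V3E x) V3_scale !form_V3 !frM; ring. Qed.
Lemma form_oppr u x : form u (- x) = - form u x.
Proof. by rewrite (V3E u) (V3E x) V3_opp !form_V3; ring. Qed.
Lemma form_addl u w x : form (u + w) x = form u x + form w x.
Proof. by rewrite (V3E u) (V3E w) (V3E x) V3_add !form_V3 !frD; ring. Qed.

Lemma mulmx_form (x u w : 'cV[F]_3) : x *m (cst u *m J *m w) = form u w *: x.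
Proof. by rewrite {1}(mx11_scalar (cst u *m J *m w)) mul_mx_scalar. Qed.

Definition Tv (u : 'cV[F]_3) (b : F) : 'M[F]_3 := 1%:M + b *: (u *m cst u *m J).

Lemma Tv_act u b x : Tv u b *m x = x + (b * form u x) *: u.
Proof.
by rewrite /Tv mulmxDl mul1mx -scalemxAl -!mulmxA [X in u *m X]mulmxA mulmx_form scalerA.
Qed.

Lemma form_mulmx (u w : 'cV[F]_3) m (A : 'M[F]_(1, m)) : (cst u *m J *m w) *m A = form u w *: A.
Proof. by rewrite {1}(mx11_scalar (cst u *m J *m w)) mul_scalar_mx. Qed.

Lemma Tv_mul_same u al be : form u u = 0 -> Tv u al *m Tv u be = Tv u (al + be).
Proof.
move=> Huu; rewrite /Tv mulmxDl mul1mx mulmxDr mulmx1 -scalemxAl -scalemxAr.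
have -> : u *m cst u *m J *m (u *m cst u *m J) = u *m ((cst u *m J *m u) *m (cst u *m J)).
  by rewrite !mulmxA.
by rewrite form_mulmx Huu scale0r mulmx0 !scaler0 addr0 scalerDl -addrA (addrC (be *: _)).
Qed.

Lemma Tv_scale u mu b : Tv (mu *: u) b = Tv u (b * (mu * fr mu)).
Proof. by rewrite /Tv cstZ -scalemxAr -!scalemxAl !scalerA (mulrC mu) mulrA. Qed.

Lemma unitary_mul (g h : 'M[F]_3) : unitary g -> unitary h -> unitary (g *m h).
Proof.
rewrite /unitary cstM => Hg Hh.
have -> : cst h *m cst g *m J *m (g *m h) = cst h *m (cst g *m J *m g) *m h by rewrite !mulmxA.
by rewrite Hg.
Qed.

Lemma cst_inv (h : 'M[F]_3) : h \in unitmx -> cst (invmx h) *m cst h = 1%:M.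
Proof. by move=> Hu; rewrite -cstM mulmxV // cst1. Qed.

Lemma unitary_inv (h : 'M[F]_3) : h \in unitmx -> unitary h -> unitary (invmx h).
Proof.
move=> Hu Hh; rewrite /unitary.
by rewrite -{1}Hh !mulmxA cst_inv // mul1mx -mulmxA mulmxV // mulmx1.
Qed.

Lemma unitary_J (h : 'M[F]_3) : h \in unitmx -> unitary h -> J *m h = cst (invmx h) *m J.
Proof. by move=> Hu Hh; rewrite -{2}Hh !mulmxA cst_inv // mul1mx. Qed.

Lemma TvJ (h : 'M[F]_3) v b : h \in unitmx -> unitary h ->
  invmx h *m Tv v b *m h = Tv (invmx h *m v) b.
Proof.
move=> Hu Hh; rewrite /Tv mulmxDr mulmx1 mulmxDl mulVmx // -scalemxAr -scalemxAl.
congr (_ + _ *: _).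
by rewrite cstM !mulmxA -(mulmxA _ J h) unitary_J // !mulmxA.
Qed.

Lemma form_unitary (h : 'M[F]_3) x y : unitary h -> form (h *m x) (h *m y) = form x y.
Proof.
move=> Hh; rewrite /form cstM.
have -> : cst x *m cst h *m J *m (h *m y) = cst x *m (cst h *m J *m h) *m y by rewrite !mulmxA.
by rewrite Hh.
Qed.

Lemma Tv_comm (g : 'M[F]_3) z b : unitary g -> g *m z = - z -> Tv z b *m g = g *m Tv z b.
Proof.
move=> Hg Hz.
have E : cst z *m J *m g = - (cst z *m J).
  by rewrite -{2}Hg !mulmxA -cstM Hz cstN !mulNmx opprK.
rewrite /Tv mulmxDl mulmxDr mul1mx mulmx1 -scalemxAl -scalemxAr.
have -> : z *m cst z *m J *m g = z *m (cst z *m J *m g) by rewrite !mulmxA.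
have -> : g *m (z *m cst z *m J) = (g *m z) *m (cst z *m J) by rewrite !mulmxA.
by rewrite E Hz mulmxN mulNmx.
Qed.

Lemma V3_zero : (0 : 'cV[F]_3) = V3 (0:F) 0 0.
Proof. by apply/matrixP => i j; rewrite !mxE; case: i => [[|[|[|//]]] Hi]. Qed.
Lemma V3_neq0 (x0 x1 x2 : F) : [|| x0 != 0, x1 != 0 | x2 != 0] -> V3 x0 x1 x2 != 0.
Proof.
move=> H; apply/negP => /eqP; rewrite V3_zero => /V3_inj [E0 E1 E2].
by move: H; rewrite E0 E1 E2 eqxx.
Qed.

Lemma two_neq0 : (2%:R : F) != 0.
Proof.
rewrite -(dvdn_pcharf charF); apply/negP => H.
by move: (dvdn_leq (isT : (0 < 2)%N) H) (prime_gt1 pp) op; case: (p) => [|[|[|n]]].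
Qed.
Lemma four_neq0 : (4%:R : F) != 0.
Proof. by rewrite (_ : 4 = 2 * 2)%N // natrM mulf_neq0 // two_neq0. Qed.

Lemma build_h (x0 x1 x2 : F) : form (V3 x0 x1 x2) (V3 x0 x1 x2) = 0 -> V3 x0 x1 x2 != 0 ->
  exists h : 'M[F]_3, [/\ \det h = 1, unitary h & h *m V3 1 0 0 = V3 x0 x1 x2].
Proof.
rewrite form_V3 => H Hnz.
have [x2z|x2n] := eqVneq x2 0.
  have x1z : x1 = 0.
    move: H; rewrite x2z fr0 mulr0 mul0r addr0 add0r => /eqP.
    by rewrite mulf_eq0 fr_eq0 orbb => /eqP.
  have x0n : x0 != 0.
    by apply: contraNneq Hnz => ->; rewrite x1z x2z -V3_zero.
  have fx0n : fr x0 != 0 by rewrite fr_eq0.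
  exists (M3 x0 0 0 0 (fr x0 / x0) 0 0 0 (fr x0)^-1); split.
  - by rewrite M3_det; field; rewrite fx0n x0n.
  - rewrite /unitary /cst M3_map /J M3_J !M3_mul; apply: M3_eq; rewrite ?fr0 ?frM ?frV ?frK; field; by rewrite ?fx0n ?x0n.
  - by rewrite M3_mulV x1z x2z; apply: V3_eq; ring.
have fx2n : fr x2 != 0 by rewrite fr_eq0.
exists (M3 x0 (fr x1 / x2) (fr x2)^-1 x1 (- fr x2 / x2) 0 x2 0 0); split.
- by rewrite M3_det; field; rewrite fx2n x2n.
- rewrite /unitary /cst M3_map /J M3_J !M3_mul; apply: M3_eq; rewrite ?fr0 ?frM ?frV ?frN ?frK;
    first [ (field; by rewrite ?fx2n ?x2n) | by rewrite -[X in _ = X]H; ring ].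
- by rewrite M3_mulV; apply: V3_eq; ring.
Qed.

Local Notation G := (SU3 F (p ^ k)).
Local Notation C := (C20 (p ^ k) a).
Definition e0 : 'cV[F]_3 := V3 1 0 0.

Lemma inG (h : {'GL_3[F]}) :
  (h \in G) = (\det (GLval h) == 1) && (cst (GLval h) *m J *m GLval h == J).
Proof. by rewrite inE. Qed.

Lemma V3_outer (x0 x1 x2 y0 y1 y2 : F) : V3 x0 x1 x2 *m cst (V3 y0 y1 y2) =
  M3 (x0 * fr y0) (x0 * fr y1) (x0 * fr y2) (x1 * fr y0) (x1 * fr y1) (x1 * fr y2)
     (x2 * fr y0) (x2 * fr y1) (x2 * fr y2).
Proof.
apply/matrixP => i j; rewrite !mxE big_ord1 !mxE.
by case: i => [[|[|[|//]]] Hi]; case: j => [[|[|[|//]]] Hj].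
Qed.

Lemma transv_Tv : transv a = Tv e0 a.
Proof.
rewrite M3_transv /Tv /e0 V3_outer /J M3_J M3_mul M3_scale M3_1 M3_add fr0 fr1.
by apply: M3_eq; ring.
Qed.

Lemma transv_unitary : unitary (transv a).
Proof.
rewrite /unitary /cst M3_transv M3_map /J M3_J !M3_mul fr0 fr1 fra.
by apply: M3_eq; ring.
Qed.

Lemma transv_det : \det (transv a) = 1.
Proof. by rewrite M3_transv M3_det; ring. Qed.

Definition mkGL (M : 'M[F]_3) (H : M \is a GRing.unit) : {'GL_3[F]} := FinRing.Unit H.

Lemma unit_of_det (M : 'M[F]_3) : \det M = 1 -> M \is a GRing.unit.
Proof. by move=> H; rewrite unitmxE H unitr1. Qed.

Definition T0 : {'GL_3[F]} := mkGL (unit_of_det transv_det).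

Lemma inC (g : {'GL_3[F]}) :
  reflect (exists2 h, h \in G & GLval g = invmx (GLval h) *m transv a *m GLval h) (g \in C).
Proof.
rewrite inE; apply: (iffP existsP) => [[h /andP [Hh /eqP E]]|[h Hh E]]; first by exists h.
by exists h; rewrite Hh E eqxx.
Qed.

Lemma G_prop (h : {'GL_3[F]}) : h \in G -> \det (GLval h) = 1 /\ unitary (GLval h).
Proof. by rewrite inG => /andP [/eqP Hd /eqP Hu]; split. Qed.

Lemma C_sub_G g : g \in C -> g \in G.
Proof.
move=> /inC [h /G_prop [Hd Hu] E].
have Hun : GLval h \in unitmx by apply: GL_unitmx.
rewrite inG E !det_mulmx det_inv Hd transv_det invr1 !mul1r eqxx /=.
apply/eqP; apply: unitary_mul => //; apply: unitary_mul => //.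
  exact: unitary_inv.
exact: transv_unitary.
Qed.

Lemma T0_C : T0 \in C.
Proof.
apply/inC; exists 1%g; last by rewrite GL_1E invmx1 mul1mx mulmx1.
by rewrite inG GL_1E det1 eqxx /= cst1 mul1mx mulmx1.
Qed.

Lemma C_Tv g : g \in C -> exists v, [/\ form v v = 0, v != 0 & GLval g = Tv v a].
Proof.
move=> /inC [h /G_prop [Hd Hu] E].
have Hun : GLval h \in unitmx by apply: GL_unitmx.
exists (invmx (GLval h) *m e0); split.
- rewrite form_unitary; last exact: unitary_inv.
  by rewrite /e0 form_V3 fr0 fr1; ring.
- apply: contraTneq isT => E0.
  have : GLval h *m (invmx (GLval h) *m e0) = e0 by rewrite mulKVmx.
  have Hn : V3 (1:F) 0 0 != 0 by rewrite V3_neq0 // oner_neq0.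
  by rewrite E0 mulmx0 /e0 => /esym/eqP; rewrite (negbTE Hn).
- by rewrite E transv_Tv TvJ.
Qed.

Lemma memC_ex v : form v v = 0 -> v != 0 -> exists2 g, g \in C & GLval g = Tv v a.
Proof.
rewrite (V3E v) => Hf Hnz; have [h [Hd Hu He]] := build_h Hf Hnz.
set H := mkGL (unit_of_det Hd).
have Hun : h \in unitmx by rewrite unitmxE Hd unitr1.
exists (H * T0 * H^-1)%g.
  apply/inC; exists H^-1%g; last by rewrite !GL_MxE GL_VxE /= invmxK.
  rewrite inG GL_VxE det_inv /= Hd invr1 eqxx /=; apply/eqP; exact: unitary_inv.
rewrite !GL_MxE GL_VxE /= -He -[h in Tv (h *m _)]invmxK -TvJ ?unitmx_inv //.
  by rewrite invmxK transv_Tv.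
exact: unitary_inv.
Qed.

Local Notation adj := (killing_adj G C).

Lemma adj_intro g1 g2 c : g1 \in C -> g2 \in C -> c \in C ->
  GLval c *m (GLval g1 *m GLval g2) = (GLval g1 *m GLval g2) *m GLval c ->
  connect adj g1 g2.
Proof.
move=> H1 H2 Hc Hcomm.
have [->|neq] := eqVneq g1 g2; first exact: connect0.
apply: connect1; rewrite /killing_adj /= H1 H2 neq /=.
apply/card_gt0P; exists c; rewrite inE Hc andbT inE C_sub_G //=.
rewrite cent1E; apply/eqP/val_inj; change (GLval (c * (g1 * g2))%g = GLval (g1 * g2 * c)%g).
by rewrite !GL_MxE -mulmxA Hcomm mulmxA.
Qed.

Lemma edge_same g1 g2 u mu : g1 \in C -> g2 \in C -> form u u = 0 ->
  GLval g1 = Tv u a -> GLval g2 = Tv (mu *: u) a -> connect adj g1 g2.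
Proof.
move=> H1 H2 Hu E1 E2; apply: (adj_intro H1 H2 H1).
by rewrite E1 E2 Tv_scale !Tv_mul_same // addrC.
Qed.

Lemma form_0r u : form u 0 = 0.
Proof. by rewrite (V3E u) V3_zero form_V3; ring. Qed.

Lemma edge_diff g1 g2 u w : g1 \in C -> g2 \in C -> form u u = 0 -> form w w = 0 ->
  GLval g1 = Tv u a -> GLval g2 = Tv w a ->
  a ^+ 2 * (form u w * fr (form u w)) = - 4%:R -> connect adj g1 g2.
Proof.
move=> H1 H2 Hu Hw E1 E2 hN.
set c0 := form u w in hN.
have Hwu : form w u = fr c0 by rewrite form_sym.
have c0n : c0 != 0.
  apply: contraTneq isT => c0z; move: hN; rewrite c0z mul0r mulr0 => /eqP.
  by rewrite eq_sym oppr_eq0 (negbTE four_neq0).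
have frc0 : fr c0 = - 4%:R / (a ^+ 2 * c0).
  by rewrite -hN; field; rewrite a0 c0n.
set z := (a * c0) *: u + 2%:R *: w.
have Hz : form z z = 0.
  rewrite /z !form_addl !form_addr !form_scalel !form_scaler Hu Hw Hwu -/c0.
  rewrite !frM fra frn frc0; field; by rewrite a0 c0n.
have zn : z != 0.
  apply: contraTneq isT => z0.
  have : form u z = 2%:R * c0.
    by rewrite /z form_addr !form_scaler Hu -/c0; ring.
  by rewrite z0 form_0r => /esym/eqP; rewrite mulf_eq0 (negbTE two_neq0) (negbTE c0n).
have [c Hc Ec] := memC_ex Hz zn.
apply: (adj_intro H1 H2 Hc); rewrite Ec E1 E2; apply: Tv_comm.
  have [_ U1] := G_prop (C_sub_G H1); have [_ U2] := G_prop (C_sub_G H2).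
  by rewrite -E1 -E2; apply: unitary_mul.
rewrite -mulmxA !Tv_act.
rewrite /z !form_addr !form_scaler Hu Hw Hwu -/c0.
rewrite frc0.
rewrite (V3E u) (V3E w) !V3_scale !V3_add V3_opp.
apply: V3_eq; field; by rewrite a0 c0n.
Qed.

Lemma edge_diff' g1 g2 u w : g1 \in C -> g2 \in C -> form u u = 0 -> form w w = 0 ->
  GLval g1 = Tv u a -> GLval g2 = Tv w a ->
  a ^+ 2 * (form u w * fr (form u w)) = - 4%:R -> connect adj g2 g1.
Proof.
move=> H1 H2 Hu Hw E1 E2 hN; apply: (edge_diff H2 H1 Hw Hu E2 E1).
by rewrite form_sym frK (mulrC (fr _)).
Qed.

Lemma toT0 g : g \in C -> connect adj T0 g /\ connect adj g T0.
Proof.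
move=> Hg; have [v [Hv vn Ev]] := C_Tv Hg.
have ET0 : GLval T0 = Tv e0 a by rewrite -transv_Tv.
have He0 : form e0 e0 = 0 by rewrite /e0 form_V3 fr0 fr1; ring.
move: Hv vn Ev; rewrite (V3E v); move: (v i0 0) (v i1 0) (v i2 0) => x0 x1 x2 Hv vn Ev.
have H := Hv; rewrite form_V3 in H.
have [x2z|x2n] := eqVneq x2 0.
  have x1z : x1 = 0.
    move: H; rewrite x2z fr0 mulr0 mul0r addr0 add0r => /eqP.
    by rewrite mulf_eq0 fr_eq0 orbb => /eqP.
  have x0n : x0 != 0.
    by apply: contraNneq vn => ->; rewrite x1z x2z -V3_zero.
  split.
    apply: (edge_same (mu := x0) T0_C Hg He0 ET0); rewrite Ev /e0 V3_scale x1z x2z.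
    by congr Tv; apply: V3_eq; ring.
  apply: (edge_same (mu := x0^-1) Hg T0_C Hv Ev); rewrite ET0 V3_scale x1z x2z.
  by congr Tv; apply: V3_eq; rewrite ?mulr0 // mulVf.
have fx2n : fr x2 != 0 by rewrite fr_eq0.
set mu := 2%:R * fr x2 / a.
have mun : mu != 0 by rewrite /mu !mulf_neq0 ?two_neq0 ?invr_eq0.
have Hb : form (mu *: e0) (mu *: e0) = 0 by rewrite form_scalel form_scaler He0 !mulr0.
have bn : mu *: e0 != 0 by rewrite /e0 V3_scale V3_neq0 // mulr1 mun.
have [gb Hgb Egb] := memC_ex Hb bn.
set z := V3 ((2%:R / a + x0 / x2) / fr x2) ((x1 / x2) / fr x2) (fr x2)^-1.
have Hzz : form z z = 0.
  have -> : form z z = (fr x0 * x2 + fr x1 * x1 + fr x2 * x0) / (x2 * fr x2) ^+ 2.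
    rewrite /z form_V3 ?(frn, frM, frV, frD, frN, frK, fra, fr1, fr0); field.
    by rewrite ?oppr_eq0 ?a0 ?x2n ?fx2n.
  by rewrite H mul0r.
have zn : z != 0 by rewrite /z V3_neq0 // invr_eq0 fx2n !orbT.
have [gc Hgc Egc] := memC_ex Hzz zn.
have c1 : a ^+ 2 * (form (mu *: e0) z * fr (form (mu *: e0) z)) = - 4%:R.
  rewrite /e0 /z /mu V3_scale form_V3 ?(frn, frM, frV, frD, frN, frK, fra, fr1, fr0).
  field; by rewrite ?oppr_eq0 ?a0 ?x2n ?fx2n.
have c2 : a ^+ 2 * (form z (V3 x0 x1 x2) * fr (form z (V3 x0 x1 x2))) = - 4%:R.
  have -> : form z (V3 x0 x1 x2) = - (2%:R / a) + (fr x0 * x2 + fr x1 * x1 + fr x2 * x0) / (x2 * fr x2).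
    rewrite /z form_V3 ?(frn, frM, frV, frD, frN, frK, fra, fr1, fr0); field.
    by rewrite ?oppr_eq0 ?a0 ?x2n ?fx2n.
  rewrite H mul0r addr0 ?(frn, frM, frV, frD, frN, frK, fra, fr1, fr0); field; by rewrite ?oppr_eq0 ?a0.
have e1 : connect adj T0 gb by apply: (edge_same T0_C Hgb He0 ET0 Egb).
have e1' : connect adj gb T0.
  apply: (edge_same (mu := mu^-1) Hgb T0_C Hb Egb).
  by rewrite ET0 scalerA mulVf // scale1r.
have e2 := edge_diff Hgb Hgc Hb Hzz Egb Egc c1.
have e2' := edge_diff' Hgb Hgc Hb Hzz Egb Egc c1.
have e3 := edge_diff Hgc Hg Hzz Hv Egc Ev c2.
have e3' := edge_diff' Hgc Hg Hzz Hv Egc Ev c2.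
split.
  exact: connect_trans e1 (connect_trans e2 e3).
exact: connect_trans e3' (connect_trans e2' e1').
Qed.

Lemma main_sec : killing_irreducible G C.
Proof.
move=> g1 g2 H1 H2; have [_ A] := toT0 H1; have [B _] := toT0 H2.
exact: connect_trans A B.
Qed.
End Main.

Unset Implicit Arguments.
Theorem corollary4p6 (F : finFieldType) (p k : nat) (a : F) :
  prime p -> odd p -> (0 < k)%N ->
  #|F| = ((p ^ k) ^ 2)%N ->
  a != 0 -> a + a ^+ (p ^ k) = 0 ->
  killing_irreducible (SU3 F (p ^ k)) (C20 (p ^ k) a).
Proof. by move=> pp op kp cardF a0 aq; apply: main_sec. Qed.
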